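(* Let $(K,d)$ be a compact metric space, let $\gamma=(\gamma_1,\dots,\gamma_n)$ be a system of proper contractions on $K$ such that $K=\bigcup_{i=1}^n\gamma_i(K)$, and let $\varphi:K\to K$ be continuous with $\varphi(\gamma_i(x))=x$ for all $x\in K$ and $i=1,\dots,n$. Assume that $\gamma$ satisfies the open set condition in $K$. Let $A=C(K)$ and let $X=C(K)$ be the Hilbert bimodule over $A$ described in the context, with left action $\phi$. Then for every $a\in J(X)^0$ there exist $m\ge 1$ and $\xi_1,\dots,\xi_m,\eta_1,\dots,\eta_m\in X$ such that \[\sum_{i=1}^m\theta_{\xi_i,\eta_i}=\phi(a).\]
   Context: A continuous map $g:K\to K$ is a proper contraction if there are constants $0<c_1\le c_2<1$ with $c_1d(x,y)\le d(g(x),g(y))\le c_2 d(x,y)$ for all $x,y\in K$. The system $\gamma$ satisfies the open set condition in $K$ if there is a non-empty open set $V\subset K$ with $\bigcup_{i=1}^n\gamma_i(V)\subset V$ and $\gamma_i(V)\cap\gamma_j(V)=\emptyset$ for $i\ne j$. Let $B_\gamma=\{y\in K: y=\gamma_i(x)=\gamma_j(x)\text{ for some }x\in K\text{ and some }i\neq j\}$. The $A$-$A$ bimodule structure on $X=C(K)$ is $(a\cdot\xi\cdot b)(x)=a(x)\xi(x)b(\varphi(x))$ for $a,b\in A$, $\xi\in X$, with $A$-valued inner product $\langle\xi,\eta\rangle_A(x)=\frac1n\sum_{i=1}^n\overline{\xi(\gamma_i(x))}\eta(\gamma_i(x))$; this makes $X$ a Hilbert bimodule (C$^*$-correspondence)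 over $A$. The left action $\phi:A\to\mathcal L(X)$ is $(\phi(a)\xi)(x)=a(x)\xi(x)$. For $\xi,\eta\in X$, $\theta_{\xi,\eta}$ is the operator $\zeta\mapsto\xi\cdot\langle\eta,\zeta\rangle_A$ on $X$. $J(X)^0$ is the set of $a\in A$ that vanish on $B_\gamma$ and whose support is a compact subset of $K\setminus B_\gamma$. *)

(* Defs.v *)
From HB Require Import structures.
From mathcomp Require Import all_boot all_order all_algebra.
From mathcomp Require Import all_classical all_reals all_analysis.
From mathcomp Require Import complex.
Set Implicit Arguments. Unset Strict Implicit. Unset Printing Implicit Defensive.
Import Order.TTheory GRing.Theory Num.Theory numFieldTopology.Exports.
Local Open Scope classical_set_scope.
Local Open Scope ring_scope.
Local Open Scope complex_scope.

Section Defs.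
Context {R : realType} {K : metricType R}.

Definition proper_contraction (g : K -> K) : Prop :=
  continuous g /\
  exists c1 c2 : R, [/\ 0 < c1, c1 <= c2, c2 < 1 &
    forall x y, c1 * mdist x y <= mdist (g x) (g y) /\
                mdist (g x) (g y) <= c2 * mdist x y].

Definition open_set_condition (n : nat) (gam : 'I_n -> K -> K) : Prop :=
  exists V : set K, [/\ open V, V !=set0,
    (forall i, gam i @` V `<=` V) &
    (forall i j, i != j -> gam i @` V `&` gam j @` V = set0)].

Definition B_gamma (n : nat) (gam : 'I_n -> K -> K) : set K :=
  [set y | exists x i j, [/\ i != j, y = gam i x & y = gam j x]].

(* continuity of a complex-valued function (C = R^2 with product topology) *)
Definition contC (f : K -> R[i]) : Prop :=
  continuous (fun x => complex.Re (f x)) /\ continuous (fun x => complex.Im (f x)).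

Definition supp (a : K -> R[i]) : set K := closure [set x | a x != 0].

Definition J0 (n : nat) (gam : 'I_n -> K -> K) (a : K -> R[i]) : Prop :=
  [/\ contC a, (forall y, B_gamma gam y -> a y = 0),
      compact (supp a) & supp a `<=` ~` B_gamma gam].

Definition innerA (n : nat) (gam : 'I_n -> K -> K) (xi eta : K -> R[i]) : K -> R[i] :=
  fun x => (n%:R)^-1 * \sum_(i < n) (xi (gam i x))^* * eta (gam i x).

Definition ractX (phi : K -> K) (xi b : K -> R[i]) : K -> R[i] :=
  fun x => xi x * b (phi x).

Definition lactX (a xi : K -> R[i]) : K -> R[i] := fun x => a x * xi x.

Definition theta (n : nat) (gam : 'I_n -> K -> K) (phi : K -> K)
  (xi eta : K -> R[i]) (zeta : K -> R[i]) : K -> R[i] :=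
  ractX phi xi (innerA gam eta zeta).

End Defs.

(* Main.v *)
Require Import Defs.
From HB Require Import structures.
From mathcomp Require Import all_boot all_order all_algebra.
From mathcomp Require Import all_classical all_reals all_analysis.
From mathcomp Require Import complex.
Import Order.TTheory GRing.Theory Num.Theory numFieldTopology.Exports.
Local Open Scope classical_set_scope.
Local Open Scope ring_scope.
Local Open Scope complex_scope.
From mathcomp Require Import ring lra.
Section Helpers.
Context {R : realType} {K : metricType R}.

Lemma cont_mdist (f g : K -> K) : continuous f -> continuous g ->
  continuous (fun x => mdist (f x) (g x) : R).
Proof.
move=> cf cg x; apply/cvgrPdist_lt => e e0.
have e2 : 0 < e / 2 by rewrite divr_gt0.
have Hf := metricType_numDomainType.cvgr_dist_lt (cf x) e2.
have Hg := metricType_numDomainType.cvgr_dist_lt (cg x) e2.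
near=> t.
have h1 : mdist (f x) (f t) < e / 2 by near: t; apply: Hf.
have h2 : mdist (g x) (g t) < e / 2 by near: t; apply: Hg.
have t1 := metric_triangle (f x) (f t) (g x).
have t2 := metric_triangle (f t) (g t) (g x).
have t3 := metric_triangle (f t) (f x) (g t).
have t4 := metric_triangle (f x) (g x) (g t).
rewrite (metric_sym (g t) (g x)) in t2.
rewrite (metric_sym (f t) (f x)) in t3.
rewrite ltr_distl; apply/andP; split; lra.
Unshelve. all: end_near.
Qed.

Lemma eps_sep (S : set K) (G : K -> R) : compact S -> continuous G ->
  (forall x, S x -> 0 < G x) -> exists2 e : R, 0 < e & forall x, S x -> e <= G x.
Proof.
move=> cS cG pos.
have cI : compact (G @` S).
  by apply: continuous_compact => //; apply: continuous_subspaceT.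
have clI : closed (G @` S) by apply: compact_closed => //; apply: hausdorff_space_R.
have oC : open (~` (G @` S)) by rewrite openC.
have n0 : (~` (G @` S)) 0 by move=> [x Sx Gx]; have := pos x Sx; rewrite Gx ltxx.
have := oC 0 n0; move/nbhs_ballP => [e e0 he].
exists e => // x Sx; rewrite leNgt; apply/negP => Gxe.
apply: (he (G x)); last by exists x.
rewrite -ball_normE /= sub0r normrN ger0_norm //; exact/ltW/pos.
Qed.

Definition seqtot : set_system (seq K) :=
  filter_from (@setT (seq K)) (fun s0 : seq K => [set s : seq K | {subset s0 <= s}]).

Instance seqtot_filter : Filter seqtot.
Proof.
apply: filter_fromT_filter; first by exists [::].
move=> A B; exists (A ++ B) => s /= h; split => y yin; apply: h;
  by rewrite mem_cat yin ?orbT.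
Qed.

Lemma ball_cover (r : R) : 0 < r -> compact [set: K] ->
  exists s : seq K, forall x, exists2 c, c \in s & mdist c x < r.
Proof.
move=> r0 cK.
have H : forall x, [set: K] x -> \forall x' \near x & i \near seqtot,
    (fun s x => exists2 c, c \in s & mdist c x < r) i x'.
  move=> x _.
  near=> y s.
  have h1 : mdist x y < r by near: y; have := nbhsx_ballx x r r0; rewrite ballEmdist.
  have h2 : x \in s by near: s; exists [:: x] => // s' /= h; apply: h; rewrite inE.
  by exists x.
have [s0 _ hs0] := (iffLR (compact_near_coveringP _)) cK (seq K) seqtot _ seqtot_filter H.
by exists s0 => x; exact: (hs0 s0 (fun y h => h) x I).
Unshelve. all: end_near.
Qed.

Lemma cjr (u : R) : Num.conj (u%:C) = u%:C.
Proof. by rewrite /Num.conj /= /conjc oppr0. Qed.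

Lemma Re_mul (u v : R[i]) : complex.Re (u * v) = complex.Re u * complex.Re v - complex.Im u * complex.Im v.
Proof. by case: u v => a b [c d]. Qed.
Lemma Im_mul (u v : R[i]) : complex.Im (u * v) = complex.Re u * complex.Im v + complex.Im u * complex.Re v.
Proof. by case: u v => a b [c d]. Qed.

Lemma contR_B (f g : K -> R) : continuous f -> continuous g -> continuous (fun x => f x - g x).
Proof. by move=> cf cg x; exact: (continuousB (cf x) (cg x)). Qed.
Lemma contR_D (f g : K -> R) : continuous f -> continuous g -> continuous (fun x => f x + g x).
Proof. by move=> cf cg x; exact: (continuousD (cf x) (cg x)). Qed.
Lemma contR_M (f g : K -> R) : continuous f -> continuous g -> continuous (fun x => f x * g x).
Proof. by move=> cf cg x; exact: (continuousM (cf x) (cg x)). Qed.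

Lemma contC_mul (f g : K -> R[i]) : contC f -> contC g -> contC (fun x => f x * g x).
Proof.
move=> [f1 f2] [g1 g2]; split.
- under eq_fun do rewrite Re_mul.
  by apply: contR_B; apply: contR_M.
- under eq_fun do rewrite Im_mul.
  by apply: contR_D; apply: contR_M.
Qed.

Lemma contC_cst (c : R[i]) : contC (fun _ : K => c).
Proof. by split; apply: cst_continuous. Qed.

Lemma contC_real (h : K -> R) : continuous h -> contC (fun x => (h x)%:C).
Proof. by move=> ch; split => //=; apply: cst_continuous. Qed.

Lemma cont_sum (m : nat) (F : 'I_m -> K -> R) : (forall k, continuous (F k)) ->
  continuous (fun x => \sum_(k < m) F k x).
Proof.
elim: m F => [|m IH] F cF.
  have -> : (fun x => \sum_(k < 0) F k x) = fun _ => 0.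
    by apply: boolp.funext => x; rewrite big_ord0.
  exact: cst_continuous.
have -> : (fun x => \sum_(k < m.+1) F k x) =
  (fun x => \sum_(k < m) F (widen_ord (leqnSn m) k) x) + F ord_max.
  by apply: boolp.funext => x; rewrite big_ord_recr.
move=> x; apply: continuousD; last exact: cF.
by apply: IH => k; exact: cF.
Qed.
Definition posp (u : R) := (u + `|u|) / 2.
Lemma posp_id u : 0 <= u -> posp u = u.
Proof. by move=> h; rewrite /posp ger0_norm //; field. Qed.
Lemma posp_0 u : u <= 0 -> posp u = 0.
Proof. by move=> h; rewrite /posp ler0_norm //; field. Qed.
Lemma posp_ge0 u : 0 <= posp u.
Proof. by have [h|h] := leP 0 u; [rewrite posp_id | rewrite posp_0 // ltW]. Qed.

Lemma contR_posp (h : K -> R) : continuous h -> continuous (fun x => posp (h x)).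
Proof.
move=> ch; rewrite /posp.
apply: contR_M; last exact: cst_continuous.
apply: contR_D => // x.
exact: (continuous_comp (ch x) (@norm_continuous _ R^o (h x))).
Qed.
End Helpers.

Theorem lemma4p3 (R : realType) (K : metricType R) (n : nat)
  (gam : 'I_n -> K -> K) (phi : K -> K)
  (hK : compact [set: K])
  (hgam : forall i, proper_contraction (gam i))
  (hcover : [set: K] = \bigcup_(i in [set: 'I_n]) (gam i @` [set: K]))
  (hphi : continuous phi)
  (hphigam : forall i x, phi (gam i x) = x)
  (hosc : open_set_condition gam)
  (a : K -> R[i]) (ha : J0 gam a) :
  exists m : nat, (0 < m)%N /\
    exists xi eta : 'I_m -> K -> R[i],
      (forall k, contC (xi k) /\ contC (eta k)) /\
      forall zeta : K -> R[i], contC zeta ->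
        (fun x => \sum_(k < m) theta gam phi (xi k) (eta k) zeta x) = lactX a zeta.
Proof.
have [[x0 _]|K0] := pselect ([set: K] !=set0); last first.
  exists 1%N; split => //; exists (fun _ _ => 0), (fun _ _ => 0); split.
    by move=> k; split; apply: contC_cst.
  by move=> zeta _; apply: boolp.funext => x; exfalso; apply: K0; exists x.
have gamc : forall i, continuous (gam i) by move=> i; case: (hgam i).
have hfix : forall x, exists j, gam j (phi x) = x.
  move=> x; have : [set: K] x by [].
  by rewrite hcover => -[j _ [y _ <-]]; exists j; rewrite hphigam.
have n0 : (0 < n)%N by have [j _] := hfix x0; exact: (leq_ltn_trans (leq0n j) (ltn_ord j)).
case: ha => ca aB cS SB.
have anz : forall x, a x != 0 -> supp a x by move=> x h; apply: subset_closure.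
have pairs : forall p : 'I_n * 'I_n, exists e : R, 0 < e /\ forall x, supp a x -> p.1 != p.2 ->
    e <= mdist x (gam p.1 (phi x)) + mdist x (gam p.2 (phi x)).
  move=> [i j] /=; have [ij|ij] := eqVneq i j.
    by exists 1; split => // x _; rewrite ij eqxx.
  have [e e0 he] : exists2 e : R, 0 < e & forall x, supp a x ->
      e <= mdist x (gam i (phi x)) + mdist x (gam j (phi x)).
    apply: eps_sep => //.
  - have cid : continuous (fun x : K => x) by move=> x; exact: cvg_id.
    have cg : forall k, continuous (fun x => gam k (phi x)).
      by move=> k x; exact: (continuous_comp (hphi x) (gamc k (phi x))).
    by apply: contR_D; apply: cont_mdist.
  - move=> x Sx; rewrite lt_neqAle addr_ge0 ?mdist_ge0 // andbT eq_sym.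
    rewrite paddr_eq0 ?mdist_ge0 //; apply/negP => /andP[/eqP hi /eqP hj].
    apply: (SB x Sx); exists (phi x), i, j; split => //.
      exact: mdist_positivity.
    exact: mdist_positivity.
  by exists e; split => // x Sx _; exact: he.
have [e he] := choice pairs.
pose eps := \big[Num.min/1]_(p : 'I_n * 'I_n) e p.
have eps0 : 0 < eps.
  rewrite /eps; elim/big_ind: _ => //.
    by move=> u v hu hv; rewrite lt_min hu hv.
  by move=> p _; case: (he p).
have epsle : forall p, eps <= e p by move=> p; exact: bigmin_le.
have KP : forall x i, supp a x -> gam i (phi x) != x -> eps <= mdist x (gam i (phi x)).
  move=> x i Sx ne; have [j hj] := hfix x.
  have ij : i != j by apply/eqP => eij; move: ne; rewrite eij hj eqxx.
  have := (he (i, j)).2 x Sx ij; rewrite /= hj mdistxx addr0 => h.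
  exact: le_trans (epsle (i, j)) h.
pose r := eps / 4.
have r0 : 0 < r by rewrite divr_gt0.
have eps4 : eps = 4 * r by rewrite /r; field.
have [s hs] := @ball_cover R K r r0 hK.
pose s' := x0 :: s.
pose m := size s'.
pose c := fun k : nat => nth x0 s' k.
pose f := fun (k : nat) (x : K) => posp (r - mdist (c k) x).
pose SS := fun x => \sum_(k < m) f k x.
have f0 : forall k x, 0 <= f k x by move=> k x; exact: posp_ge0.
have SS0 : forall x, 0 < SS x.
  move=> x; have [c0 c0s hc0] := hs x.
  have c0s' : c0 \in s' by rewrite inE c0s orbT.
  have kl : (index c0 s' < m)%N by rewrite index_mem.
  pose k := Ordinal kl.
  have ck : c k = c0 by rewrite /c /= nth_index.
  have fk : 0 < f k x by rewrite /f ck posp_id ?subr_gt0 // subr_ge0 ltW.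
  rewrite /SS (bigD1 k) //=.
  have : 0 <= \sum_(i < m | i != k) f i x by apply: sumr_ge0 => i _.
  lra.
pose p := fun (k : nat) (x : K) => f k x / SS x.
pose g := fun (k : nat) (y : K) => 1 - posp (1 - r^-1 * posp (2 * r - mdist (c k) y)).
have fz : forall k x, ~ mdist (c k) x < r -> f k x = 0.
  move=> k x h; rewrite /f; apply: posp_0; move/negP: h; rewrite -leNgt.
  by rewrite subr_le0.
have PA : forall k x, p k x * g k x = p k x.
  move=> k x; have [lt|nlt] := boolP (mdist (c k) x < r); last first.
    by rewrite /p fz ?mul0r // ; apply/negP.
  suff -> : g k x = 1 by rewrite mulr1.
  rewrite /g (@posp_id _ (2 * r - _)); last lra.
  rewrite posp_0 ?subr0 //.
  set w := r^-1 * _.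
  have rw : r * w = 2 * r - mdist (c k) x by rewrite /w mulrA mulfV ?gt_eqF // mul1r.
  nra.
have PB : forall k x y, 4 * r <= mdist x y -> p k x * g k y = 0.
  move=> k x y dxy; have [lt|nlt] := boolP (mdist (c k) x < r); last first.
    by rewrite /p fz ?mul0r // ; apply/negP.
  suff -> : g k y = 0 by rewrite mulr0.
  have t := metric_triangle x (c k) y; rewrite (metric_sym x (c k)) in t.
  rewrite /g (@posp_0 _ (2 * r - _)); last lra.
  by rewrite mulr0 subr0 posp_id ?subrr.
have Psum : forall x, \sum_(k < m) p k x = 1.
  by move=> x; rewrite /p -mulr_suml; apply: divff; rewrite gt_eqF //; exact: SS0.
have cd : forall k, continuous (fun x => mdist (c k) x).
  move=> k; apply: (@cont_mdist R K (fun=> c k) id); [exact: cst_continuous | by move=> x; exact: cvg_id].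
have cf : forall k, continuous (f k).
  by move=> k; apply: contR_posp; apply: contR_B; [exact: cst_continuous | exact: cd].
have cp : forall k, continuous (p k).
  move=> k; apply: contR_M; first exact: cf.
  move=> x; apply: continuousV; first by rewrite gt_eqF.
  by apply: cont_sum => i; exact: cf.
have cg : forall k, continuous (g k).
  move=> k; apply: contR_B; first exact: cst_continuous.
  apply: contR_posp; apply: contR_B; first exact: cst_continuous.
  apply: contR_M; first exact: cst_continuous.
  by apply: contR_posp; apply: contR_B; [exact: cst_continuous | exact: cd].
exists m; split; first by [].
exists (fun k x => (n%:R * a x) * (p k x)%:C), (fun k y => (g k y)%:C); split.
  move=> k; split.
    apply: contC_mul; last by apply: contC_real; exact: cp.
    by apply: contC_mul => //; exact: contC_cst.
  by apply: contC_real; exact: cg.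
move=> zeta _; apply: boolp.funext => x.
rewrite /theta /ractX /innerA /lactX.
have [ax0|axn] := eqVneq (a x) 0.
  by rewrite ax0 mul0r; apply: big1 => k _; rewrite mulr0 !mul0r.
have Sx := anz x axn.
have nz : (n%:R : R[i]) != 0 by rewrite pnatr_eq0 -lt0n.
rewrite (eq_bigr (fun k : 'I_m => a x * \sum_(i < n) zeta (gam i (phi x)) *
   (p k x * g k (gam i (phi x)))%:C)); last first.
  move=> k _; rewrite !mulr_sumr; apply: eq_bigr => i _.
  rewrite cjr [in RHS]rmorphM; field; exact: nz.
rewrite -mulr_sumr exchange_big /=; congr (a x * _).
rewrite (eq_bigr (fun i : 'I_n => zeta (gam i (phi x)) *
   (if gam i (phi x) == x then 1 else 0))); last first.
  move=> i _; rewrite -mulr_sumr -rmorph_sum; congr (_ * _).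
  case: eqP => [->|ne].
    by rewrite (eq_bigr (fun k : 'I_m => p k x)) ?Psum ?rmorph1 // => k _; exact: PA.
  rewrite big1 ?rmorph0 // => k _; apply: PB; rewrite -eps4.
  by apply: KP => //; apply/eqP.
have [j hj] := hfix x.
rewrite (bigD1 j) //= hj eqxx mulr1 big1 ?addr0 // => i ij.
case: eqP => [hi|]; last by rewrite mulr0.
exfalso; apply: (SB x Sx); exists (phi x), i, j; split => //.
Qed.
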